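(* Let $N_t,N_r,M$ be positive integers with $M>r:=N_t+N_r$, let ${\bf F}\in\mathbb{C}^{N_r\times M}$, ${\bf G}\in\mathbb{C}^{N_t\times M}$, ${\bf H}_d\in\mathbb{C}^{N_r\times N_t}$, and let $\boldsymbol{\Theta}\in\mathbb{C}^{M\times M}$ be unitary and symmetric ($\boldsymbol{\Theta}\boldsymbol{\Theta}^H={\bf I}_M$, $\boldsymbol{\Theta}=\boldsymbol{\Theta}^T$). Let ${\bf Z}=[{\bf F}^H\,|\,{\bf G}^T]\in\mathbb{C}^{M\times r}$ and let ${\bf U}_Z\in\mathbb{C}^{M\times k}$ have orthonormal columns forming a basis of the column space of ${\bf Z}$ ($k=\operatorname{rank}{\bf Z}\le r$). Define $\tilde{\boldsymbol{\Theta}}={\bf U}_Z^H\boldsymbol{\Theta}{\bf U}_Z^*$ and $\boldsymbol{\Theta}_{lr}={\bf U}_Z\tilde{\boldsymbol{\Theta}}{\bf U}_Z^T$. Then $\boldsymbol{\Theta}_{lr}$ is a symmetric matrix of rank at most $r$, $\tilde{\boldsymbol{\Theta}}$ is a symmetric matrix with $\tilde{\boldsymbol{\Theta}}\tilde{\boldsymbol{\Theta}}^H\preceq{\bf I}_k$, and (i) ${\bf F}\boldsymbol{\Theta}{\bf G}^H={\bf F}\boldsymbol{\Theta}_{lr}{\bf G}^H$, hence ${\bf H}_d+{\bf F}\boldsymbol{\Theta}{\bf G}^H={\bf H}_d+{\bf F}\boldsymbol{\Theta}_{lr}{\bf G}^H$; (ii) $\boldsymbol{\Theta}_{lr}\boldsymbol{\Theta}_{lr}^H\preceq{\bf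 I}_M$.
   Context: ${\bf A}^*$ is the entrywise conjugate, ${\bf A}^H$ the conjugate transpose; ${\bf X}\preceq{\bf Y}$ means ${\bf Y}-{\bf X}$ is positive semidefinite. $[{\bf A}\,|\,{\bf B}]$ denotes horizontal concatenation. *)

(* Defs.v *)
(* Complex scalars: an arbitrary numClosedFieldType C
   (e.g. complex R[i] for R : realType), with conjugation Num.conj. *)
From HB Require Import structures.
From mathcomp Require Import all_boot all_order all_algebra.
Set Implicit Arguments. Unset Strict Implicit. Unset Printing Implicit Defensive.
Import Order.TTheory GRing.Theory Num.Theory.
Local Open Scope ring_scope.

Definition entconj (C : numClosedFieldType) m n (A : 'M[C]_(m, n)) : 'M[C]_(m, n) :=
  map_mx Num.conj A.

Definition adjmx (C : numClosedFieldType) m n (A : 'M[C]_(m, n)) : 'M[C]_(n, m) :=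
  (entconj A)^T.

Definition psdmx (C : numClosedFieldType) n (A : 'M[C]_n) : Prop :=
  adjmx A = A /\ forall v : 'cV[C]_n, 0 <= (adjmx v *m A *m v) 0 0.

Definition lemx (C : numClosedFieldType) n (X Y : 'M[C]_n) : Prop := psdmx (Y - X).

Arguments entconj {C m n} A.
Arguments adjmx {C m n} A.
Arguments psdmx {C n} A.
Arguments lemx {C n} X Y.

(* Main.v *)
Require Import Defs.
From HB Require Import structures.
From mathcomp Require Import all_boot all_order all_algebra.
Import Order.TTheory GRing.Theory Num.Theory.
Local Open Scope ring_scope.
Section S. Variable C : numClosedFieldType.
Lemma ec_mul m n p (A : 'M[C]_(m,n)) (B : 'M[C]_(n,p)) : entconj (A *m B) = entconj A *m entconj B.
Proof. by rewrite /entconj map_mxM. Qed.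
Lemma ec_tr m n (A : 'M[C]_(m,n)) : entconj A^T = (entconj A)^T.
Proof. by rewrite /entconj map_trmx. Qed.
Lemma ec_K m n (A : 'M[C]_(m,n)) : entconj (entconj A) = A.
Proof. by apply/matrixP=> i j; rewrite !mxE conjCK. Qed.
Lemma ec_1 n : entconj (1%:M : 'M[C]_n) = 1%:M.
Proof. by apply/matrixP=> i j; rewrite !mxE; case: (i == j); rewrite /= ?rmorph1 ?rmorph0. Qed.
Lemma ec_add m n (A B : 'M[C]_(m,n)) : entconj (A + B) = entconj A + entconj B.
Proof. by apply/matrixP=> i j; rewrite !mxE rmorphD. Qed.
Lemma ec_opp m n (A : 'M[C]_(m,n)) : entconj (- A) = - entconj A.
Proof. by apply/matrixP=> i j; rewrite !mxE rmorphN. Qed.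
Lemma adj_mul m n p (A : 'M[C]_(m,n)) (B : 'M[C]_(n,p)) : adjmx (A *m B) = adjmx B *m adjmx A.
Proof. by rewrite /adjmx ec_mul trmx_mul. Qed.
Lemma adj_K m n (A : 'M[C]_(m,n)) : adjmx (adjmx A) = A.
Proof. by rewrite /adjmx ec_tr ec_K trmxK. Qed.
Lemma adj_1 n : adjmx (1%:M : 'M[C]_n) = 1%:M.
Proof. by rewrite /adjmx ec_1 trmx1. Qed.
Lemma adj_add m n (A B : 'M[C]_(m,n)) : adjmx (A + B) = adjmx A + adjmx B.
Proof. by rewrite /adjmx ec_add linearD. Qed.
Lemma adj_opp m n (A : 'M[C]_(m,n)) : adjmx (- A) = - adjmx A.
Proof. by rewrite /adjmx ec_opp linearN. Qed.
Lemma adj_sub m n (A B : 'M[C]_(m,n)) : adjmx (A - B) = adjmx A - adjmx B.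
Proof. by rewrite adj_add adj_opp. Qed.

Lemma psd_gram m n (A : 'M[C]_(m,n)) : psdmx (adjmx A *m A).
Proof.
split; first by rewrite adj_mul adj_K.
move=> v; rewrite !mulmxA -adj_mul -mulmxA mxE.
apply: sumr_ge0 => i _.
rewrite /adjmx !mxE mulrC; exact: mul_conjC_ge0.
Qed.
Lemma psd_add n (A B : 'M[C]_n) : psdmx A -> psdmx B -> psdmx (A + B).
Proof.
move=> [hA pA] [hB pB]; split; first by rewrite adj_add hA hB.
move=> v; rewrite mulmxDr mulmxDl mxE; exact: addr_ge0.
Qed.
Lemma psd_cong m n (A : 'M[C]_n) (B : 'M[C]_(n,m)) : psdmx A -> psdmx (adjmx B *m A *m B).
Proof.
move=> [hA pA]; split; first by rewrite !adj_mul adj_K hA mulmxA.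
move=> v; have := pA (B *m v); by rewrite adj_mul !mulmxA.
Qed.
End S.

Theorem theorem2 (C : numClosedFieldType) (Nt Nr M k : nat)
  (F : 'M[C]_(Nr, M)) (G : 'M[C]_(Nt, M)) (Hd : 'M[C]_(Nr, Nt))
  (Theta : 'M[C]_M) (U : 'M[C]_(M, k)) :
  (0 < Nt)%N -> (0 < Nr)%N -> (0 < M)%N -> (Nt + Nr < M)%N ->
  Theta *m adjmx Theta = 1%:M ->
  Theta = Theta^T ->
  (* U has orthonormal columns ... *)
  adjmx U *m U = 1%:M ->
  (* ... spanning the column space of Z = [F^H | G^T] *)
  (U^T == (row_mx (adjmx F) G^T)^T)%MS ->
  let Thetat := adjmx U *m Theta *m entconj U in
  let Thetalr := U *m Thetat *m U^T in
  [/\ Thetalr^T = Thetalr,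
      (\rank Thetalr <= Nt + Nr)%N,
      Thetat^T = Thetat &
      lemx (Thetat *m adjmx Thetat) 1%:M] /\
  [/\ F *m Theta *m adjmx G = F *m Thetalr *m adjmx G,
      Hd + F *m Theta *m adjmx G = Hd + F *m Thetalr *m adjmx G
    & lemx (Thetalr *m adjmx Thetalr) 1%:M].
Proof.
move=> _ _ _ _ hTT hTs hUU hsp Thetat Thetalr.
have hUc : U^T *m entconj U = 1%:M.
  by have := congr1 entconj hUU; rewrite ec_mul /adjmx ec_tr ec_K ec_1.
have hTt : Thetat^T = Thetat.
  by rewrite /Thetat !trmx_mul -hTs [(adjmx U)^T]trmxK mulmxA.
have hTlr : Thetalr^T = Thetalr.
  by rewrite /Thetalr trmx_mul trmxK trmx_mul hTt mulmxA.
set Z := row_mx (adjmx F) G^T.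
have hZ : U *m adjmx U *m Z = Z.
  have /andP[_ /submxP[D hD]] := hsp.
  have -> : Z = U *m D^T by rewrite -[Z]trmxK hD trmx_mul trmxK.
  by rewrite -!mulmxA (mulmxA (adjmx U)) hUU mul1mx.
move: hZ; rewrite /Z mul_mx_row => /eq_row_mx [hF hG].
have hF' : F *m U *m adjmx U = F.
  by have := congr1 adjmx hF; rewrite !adj_mul !adj_K mulmxA.
have hG' : entconj U *m U^T *m adjmx G = adjmx G.
  by have := congr1 entconj hG; rewrite !ec_mul /adjmx !ec_tr ec_K.
have hI : F *m Theta *m adjmx G = F *m Thetalr *m adjmx G.
  rewrite /Thetalr /Thetat !mulmxA hF' -!mulmxA; congr (_ *m (_ *m _)).
  by rewrite mulmxA hG'.
have hTtle : lemx (Thetat *m adjmx Thetat) 1%:M.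
  rewrite /lemx; set P := entconj U *m U^T.
  have hP1 : adjmx P = P by rewrite /P adj_mul /adjmx ec_tr ec_K trmxK.
  have hP2 : P *m P = P by rewrite /P mulmxA -(mulmxA _ U^T) hUc mulmx1.
  have hQ : adjmx (1%:M - P) *m (1%:M - P) = 1%:M - P.
    by rewrite adj_sub adj_1 hP1 mulmxBl mul1mx mulmxBr mulmx1 hP2 subrr subr0.
  have -> : 1%:M - Thetat *m adjmx Thetat =
    adjmx (adjmx Theta *m U) *m (1%:M - P) *m (adjmx Theta *m U).
    rewrite adj_mul adj_K mulmxBr mulmx1 mulmxBl.
    have e1 : adjmx U *m Theta *m (adjmx Theta *m U) = 1%:M.
      by rewrite mulmxA -(mulmxA _ Theta) hTT mulmx1 hUU.
    rewrite e1; congr (_ - _).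
    by rewrite /Thetat /P !adj_mul !adj_K /adjmx ec_K !mulmxA.
  apply: psd_cong; rewrite -hQ; exact: psd_gram.
split; first split => //.
  rewrite /Thetalr (leq_trans (mxrankM_maxl _ _)) //.
  rewrite (leq_trans (mxrankM_maxl _ _)) //.
  by rewrite -mxrank_tr (eqmx_rank hsp) (leq_trans (rank_leq_row _)) // addnC.
split => //; first by rewrite hI.
rewrite /lemx; have -> : 1%:M - Thetalr *m adjmx Thetalr =
   adjmx (1%:M - U *m adjmx U) *m (1%:M - U *m adjmx U)
   + adjmx (adjmx U) *m (1%:M - Thetat *m adjmx Thetat) *m adjmx U.
  rewrite adj_sub adj_1 adj_mul adj_K mulmxBl mul1mx mulmxBr mulmx1.
  rewrite -(mulmxA U (adjmx U)) (mulmxA (adjmx U)) hUU mul1mx subrr subr0.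
  have hA : adjmx U^T = entconj U by rewrite /adjmx ec_tr trmxK.
  have e2 : Thetalr *m adjmx Thetalr = U *m (Thetat *m adjmx Thetat) *m adjmx U.
    rewrite /Thetalr adj_mul adj_mul hA !mulmxA -(mulmxA _ U^T (entconj U)) hUc mulmx1.
    by rewrite ?mulmxA.
  rewrite e2 mulmxBr mulmx1 mulmxBl.
  by rewrite addrA subrK.
apply: psd_add; first exact: psd_gram.
by apply: psd_cong.
Qed.
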